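(* Let $u^m\in\mathbb{P}^{\mathrm{disc}}_0(\mathcal{T}_h)$ and $v^m\in\mathbb{P}^{\mathrm{cont}}_1(\mathcal{T}_h)$ be given with $u^m\ge 0$ in $\Omega$ and, in the case $\tau>0$, $v^m\ge 0$ in $\Omega$. Then any solution $(v^{m+1},u^{m+1},\mu_\varepsilon^{m+1})$ of the fully discrete scheme (Step 1 and Step 2 described in the context) satisfies $u^{m+1}\ge 0$ and $v^{m+1}\ge 0$ in $\Omega$.
   Context: Let $\Omega\subset\mathbb{R}^2$ be a bounded polygonal domain and $\mathcal{T}_h$ a shape-regular triangular mesh of $\overline\Omega$ of size $h$. $\mathcal{E}_h^i$ denotes the set of interior edges. For an interior edge $e=\partial K\cap\partial L$ the two adjacent triangles are labelled $K,L$ so that the unit normal $\mathbf{n}_e$ points from $K$ to $L$; for a function $w$, $w_K,w_L$ are its traces from $K$ and $L$ and the jump is $[\![w]\!]=w_K-w_L$. $C_K$ denotes the barycenter of $K$, and $\mathcal{D}_e=|C_K-C_L|$ for $e=K\cap L\in\mathcal{E}_h^i$. The mesh is assumed to satisfy: (H1) for every interior edge $e=K\cap L$, the segment joining $C_K$ and $C_L$ is orthogonal to $e$; (H2) every angle of every triangle of $\mathcal{T}_h$ is at most $\pi/2$. $\mathbb{P}^{\mathrm{disc}}_0(\mathcal{T}_h)$ is the space of piecewise constant functions on $\mathcal{T}_h$, $\mathbb{P}^{\mathrm{cont}}_1(\mathcal{T}_h)$ the space of continuous piecewise linear functions, and $\Pi_0$ the $L^2(\Omega)$-orthogonal projection onto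 $\mathbb{P}^{\mathrm{disc}}_0(\mathcal{T}_h)$. For a scalar $w$, $w_\oplus=\max\{w,0\}$, $w_\ominus=-\min\{w,0\}$. $(\cdot,\cdot)$ is the $L^2(\Omega)$ inner product and $(f,g)_h=\int_\Omega I_h(fg)$ the mass-lumped inner product, $I_h$ being the nodal $\mathbb{P}_1$ interpolant. The upwind form is $$a^{upw}_h(\mu;u,\bar u)=\int_\Omega(\nabla\mu\cdot\nabla\bar u)\,u+\sum_{e\in\mathcal{E}_h^i,\,e=K\cap L}\frac{1}{\mathcal{D}_e}\int_e\Big(([\![\Pi_0\mu]\!])_\oplus u_K-([\![\Pi_0\mu]\!])_\ominus u_L\Big)[\![\bar u]\!].$$ Parameters: $k_0,\dots,k_4>0$, $\tau\in\{0,1\}$, time step $\Delta t>0$, $\varepsilon>0$; $\delta_t w^{m+1}=(w^{m+1}-w^m)/\Delta t$. The scheme: Step 1: find $v^{m+1}\in\mathbb{P}^{\mathrm{cont}}_1(\mathcal{T}_h)$ with $\tau(\delta_t v^{m+1},\bar v)_h+k_2(\nabla v^{m+1},\nabla\bar v)+k_3(v^{m+1},\bar v)_h-k_4(u^m,\bar v)=0$ for all $\bar v\in\mathbb{P}^{\mathrm{cont}}_1(\mathcal{T}_h)$. Step 2: find $(u^{m+1},\mu_\varepsilon^{m+1})\in\mathbb{P}^{\mathrm{disc}}_0(\mathcal{T}_h)^2$ with $u^{m+1}+\varepsilon>0$ such that $(\delta_t u^{m+1},\bar u)+a^{upw}_h(\mu_\varepsilon^{m+1};(u^{m+1})_\oplus,\bar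 u)=0$ and $(\mu_\varepsilon^{m+1},\bar\mu)-k_0(\log(u^{m+1}+\varepsilon),\bar\mu)+k_1(v^{m+1},\bar\mu)=0$ for all $\bar u,\bar\mu\in\mathbb{P}^{\mathrm{disc}}_0(\mathcal{T}_h)$. *)

(* Defs.v *)
From HB Require Import structures.
From mathcomp Require Import all_boot all_order all_algebra.
From mathcomp Require Import all_classical all_reals all_analysis.
Set Implicit Arguments. Unset Strict Implicit. Unset Printing Implicit Defensive.
Import Order.TTheory GRing.Theory Num.Theory.
Local Open Scope ring_scope.

Definition i0 : 'I_3 := @Ordinal 3 0 isT.
Definition i1 : 'I_3 := @Ordinal 3 1 isT.
Definition i2 : 'I_3 := @Ordinal 3 2 isT.

Section Mesh.
Variable R : realType.
Variables nV nT : nat.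
Variable p : 'I_nV -> R * R.
Variable tri : 'I_nT -> 'I_3 -> 'I_nV.

Definition dot (a b : R * R) : R := a.1 * b.1 + a.2 * b.2.
Definition vsub (a b : R * R) : R * R := (a.1 - b.1, a.2 - b.2).
Definition dist (a b : R * R) : R := Num.sqrt (dot (vsub a b) (vsub a b)).

Definition vtx (K : 'I_nT) (i : 'I_3) : R * R := p (tri K i).

(* signed twice-area of K *)
Definition sdet (K : 'I_nT) : R :=
  let e1 := vsub (vtx K i1) (vtx K i0) in
  let e2 := vsub (vtx K i2) (vtx K i0) in
  e1.1 * e2.2 - e2.1 * e1.2.

Definition area (K : 'I_nT) : R := `|sdet K| / 2.

Definition bary (K : 'I_nT) : R * R :=
  ((\sum_i (vtx K i).1) / 3, (\sum_i (vtx K i).2) / 3).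

Definition in_tri (K : 'I_nT) (x : R * R) : Prop :=
  exists l : 'I_3 -> R, (forall i, 0 <= l i) /\ \sum_i l i = 1 /\
    x = (\sum_i l i * (vtx K i).1, \sum_i l i * (vtx K i).2).
Definition in_tri_int (K : 'I_nT) (x : R * R) : Prop :=
  exists l : 'I_3 -> R, (forall i, 0 < l i) /\ \sum_i l i = 1 /\
    x = (\sum_i l i * (vtx K i).1, \sum_i l i * (vtx K i).2).

Definition common (K L : 'I_nT) : {set 'I_nV} :=
  [set a | (a \in codom (tri K)) && (a \in codom (tri L))].

Definition in_hull (S : {set 'I_nV}) (x : R * R) : Prop :=
  exists l : 'I_nV -> R, (forall a, 0 <= l a) /\ (forall a, a \notin S -> l a = 0)
    /\ \sum_a l a = 1 /\ x = (\sum_a l a * (p a).1, \sum_a l a * (p a).2).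

(* K and L share an (interior) edge *)
Definition adjacent (K L : 'I_nT) : bool := (K != L) && (#|common K L| == 2)%N.

Definition ea (K L : 'I_nT) : 'I_nV := nth (tri K i0) (enum (common K L)) 0.
Definition eb (K L : 'I_nT) : 'I_nV := nth (tri K i0) (enum (common K L)) 1.
Definition edge_len (K L : 'I_nT) : R := dist (p (ea K L)) (p (eb K L)).
Definition De (K L : 'I_nT) : R := dist (bary K) (bary L).

(* T_h is a (conforming) triangulation of Omega := union of its triangles *)
Definition is_mesh : Prop :=
  (forall K, sdet K != 0) /\
  (forall a : 'I_nV, exists K i, tri K i = a) /\
  (forall K L, K != L -> forall x, ~ (in_tri_int K x /\ in_tri_int L x)) /\
  (forall K L x, in_tri K x -> in_tri L x -> in_hull (common K L) x).

Definition H1 : Prop :=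
  forall K L, adjacent K L ->
    dot (vsub (bary K) (bary L)) (vsub (p (ea K L)) (p (eb K L))) = 0.

(* (H2): every angle is at most pi/2, i.e. has nonnegative cosine *)
Definition H2 : Prop :=
  forall K (i j k : 'I_3), i != j -> i != k -> j != k ->
    0 <= dot (vsub (vtx K j) (vtx K i)) (vsub (vtx K k) (vtx K i)).

(* P0 functions: 'I_nT -> R (value on each K);
   continuous P1 functions: 'I_nV -> R (nodal values). *)

Definition grad (K : 'I_nT) (v : 'I_nV -> R) : R * R :=
  let e1 := vsub (vtx K i1) (vtx K i0) in
  let e2 := vsub (vtx K i2) (vtx K i0) in
  let d1 := v (tri K i1) - v (tri K i0) in
  let d2 := v (tri K i2) - v (tri K i0) in
  ((d1 * e2.2 - d2 * e1.2) / sdet K, (d2 * e1.1 - d1 * e2.1) / sdet K).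

Definition stiff (v w : 'I_nV -> R) : R := \sum_K area K * dot (grad K v) (grad K w).
(* mass-lumped product (f, g)_h = int I_h(f g) for P1 f, g *)
Definition lumped (f g : 'I_nV -> R) : R :=
  \sum_K area K / 3 * \sum_i f (tri K i) * g (tri K i).
Definition ip00 (u w : 'I_nT -> R) : R := \sum_K area K * u K * w K.
Definition ip01 (u : 'I_nT -> R) (v : 'I_nV -> R) : R :=
  \sum_K area K * u K * ((\sum_i v (tri K i)) / 3).

Definition posp (x : R) : R := Num.max x 0.
Definition negp (x : R) : R := - Num.min x 0.

(* upwind form for mu, w, ubar in P0 (the volume term vanishes since the
   elementwise gradient of P0 functions is 0, and Pi_0 mu = mu). Each interior
   edge e = K /\ L is counted once, labelled with K the smaller index. *)
Definition a_upw (mu w ubar : 'I_nT -> R) : R :=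
  \sum_K \sum_(L | (val K < val L)%N && adjacent K L)
    edge_len K L / De K L *
    (posp (mu K - mu L) * w K - negp (mu K - mu L) * w L) * (ubar K - ubar L).

Definition step1 (tau dt k2 k3 k4 : R) (um : 'I_nT -> R) (vm v1 : 'I_nV -> R) : Prop :=
  forall vbar : 'I_nV -> R,
    tau * lumped (fun a => (v1 a - vm a) / dt) vbar + k2 * stiff v1 vbar
    + k3 * lumped v1 vbar - k4 * ip01 um vbar = 0.

Definition step2 (dt eps k0 k1 : R) (um u1 mu : 'I_nT -> R) (v1 : 'I_nV -> R) : Prop :=
  (forall K, 0 < u1 K + eps) /\
  (forall ubar : 'I_nT -> R,
     ip00 (fun K => (u1 K - um K) / dt) ubar + a_upw mu (fun K => posp (u1 K)) ubar = 0) /\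
  (forall mubar : 'I_nT -> R,
     ip00 mu mubar - k0 * ip00 (fun K => ln (u1 K + eps)) mubar + k1 * ip01 mubar v1 = 0).

Definition P1_nonneg (v : 'I_nV -> R) : Prop :=
  forall K (l : 'I_3 -> R), (forall i, 0 <= l i) -> \sum_i l i = 1 ->
    0 <= \sum_i l i * v (tri K i).

Definition P0_nonneg (u : 'I_nT -> R) : Prop := forall K, 0 <= u K.

End Mesh.

(* Main.v *)
Require Import Defs.
From HB Require Import structures.
From mathcomp Require Import all_boot all_order all_algebra.
From mathcomp Require Import all_classical all_reals all_analysis.
From mathcomp Require Import ring lra.
Import Order.TTheory GRing.Theory Num.Theory.
Local Open Scope ring_scope.
Set Implicit Arguments. Unset Strict Implicit.

Section Aux.
Variable R : realType.

Lemma pn_facts (x : R) : 0 <= posp x /\ 0 <= negp x /\ posp x * negp x = 0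
  /\ x * negp x = - (negp x * negp x) /\ (x < 0 -> 0 < negp x).
Proof.
rewrite /posp /negp /Order.max /Order.min.
case: (boolP (x < 0)) => h /=.
- by repeat split; try move=> ?; lra.
- rewrite -leNgt in h.
  by repeat split; try move=> ?; lra.
Qed.

Lemma min_exists (n : nat) (f : 'I_n -> R) (b : 'I_n) :
  exists a, forall c, f a <= f c.
Proof.
case: (@arg_minP _ _ _ b predT f isT) => a _ H.
by exists a => c; apply: H.
Qed.


Lemma pure (x0 y0 x1 y1 x2 y2 d1 d2 f1 f2 : R) :
  (x1-x0)*(y2-y0) - (x2-x0)*(y1-y0) != 0 ->
  0 <= (x1-x0)*(x2-x0)+(y1-y0)*(y2-y0) ->
  0 <= (x0-x1)*(x2-x1)+(y0-y1)*(y2-y1) ->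
  0 <= (x0-x2)*(x1-x2)+(y0-y2)*(y1-y2) ->
  ((f1 = -1 /\ f2 = -1 /\ 0 <= d1 /\ 0 <= d2) \/
   (f1 = 1 /\ f2 = 0 /\ d1 <= 0 /\ d1 <= d2) \/
   (f1 = 0 /\ f2 = 1 /\ d2 <= 0 /\ d2 <= d1) \/ (f1 = 0 /\ f2 = 0)) ->
  ((d1*(y2-y0) - d2*(y1-y0))/((x1-x0)*(y2-y0) - (x2-x0)*(y1-y0))) *
  ((f1*(y2-y0) - f2*(y1-y0))/((x1-x0)*(y2-y0) - (x2-x0)*(y1-y0))) +
  ((d2*(x1-x0) - d1*(x2-x0))/((x1-x0)*(y2-y0) - (x2-x0)*(y1-y0))) *
  ((f2*(x1-x0) - f1*(x2-x0))/((x1-x0)*(y2-y0) - (x2-x0)*(y1-y0))) <= 0.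
Proof.
set D := (x1-x0)*(y2-y0) - (x2-x0)*(y1-y0).
move=> hD ha hb hc hcase.
set g := (x1-x0)*(x2-x0)+(y1-y0)*(y2-y0).
set A := (x1-x0)*(x1-x0)+(y1-y0)*(y1-y0).
set B := (x2-x0)*(x2-x0)+(y2-y0)*(y2-y0).
have hA : 0 <= A - g.
  suff -> : A - g = (x0-x1)*(x2-x1)+(y0-y1)*(y2-y1) by [].
  rewrite /A /g; ring.
have hB : 0 <= B - g.
  suff -> : B - g = (x0-x2)*(x1-x2)+(y0-y2)*(y1-y2) by [].
  rewrite /B /g; ring.
have -> : ((d1*(y2-y0) - d2*(y1-y0))/D) * ((f1*(y2-y0) - f2*(y1-y0))/D) +
  ((d2*(x1-x0) - d1*(x2-x0))/D) * ((f2*(x1-x0) - f1*(x2-x0))/D) =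
  (d1*f1*B - (d1*f2+d2*f1)*g + d2*f2*A) / (D*D).
  by rewrite /A /B /g; field.
apply: mulr_le0_ge0; last by rewrite invr_ge0 -expr2 sqr_ge0.
have hg : 0 <= g := ha.
clearbody A B g D.
case: hcase => [[-> [-> [h1 h2]]]|[[-> [-> [h1 h2]]]|[[-> [-> [h1 h2]]]|[-> ->]]]].
- have e : d1 * -1 * B - (d1 * -1 + d2 * -1) * g + d2 * -1 * A = - (d1*(B-g)) - d2*(A-g) by ring.
  rewrite e; have := mulr_ge0 h1 hB; have := mulr_ge0 h2 hA. lra.
- have e : d1 * 1 * B - (d1 * 0 + d2 * 1) * g + d2 * 0 * A = d1*(B-g) - (d2-d1)*g by ring.
  rewrite e; have := mulr_le0_ge0 h1 hB; have h3 : 0 <= d2 - d1 by lra.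
  have := mulr_ge0 h3 hg; lra.
- have e : d1 * 0 * B - (d1 * 1 + d2 * 0) * g + d2 * 1 * A = d2*(A-g) - (d1-d2)*g by ring.
  rewrite e; have := mulr_le0_ge0 h1 hA; have h3 : 0 <= d1 - d2 by lra.
  have := mulr_ge0 h3 hg; lra.
- have e : d1 * 0 * B - (d1 * 0 + d2 * 0) * g + d2 * 0 * A = 0 by ring.
  by rewrite e.
Qed.

Lemma upw_term (c pd nd pK nK pL nL : R): 0<=c -> 0<=pd -> 0<=nd -> 0<=pK -> 0<=nK ->
  0<=pL -> 0<=nL -> pK*nK = 0 -> pL*nL=0 -> c*(pd*pK - nd*pL)*(nK-nL) <= 0.
Proof.
move=> hc hpd hnd hpK hnK hpL hnL e1 e2.
have e : (pd*pK - nd*pL)*(nK - nL) = pd*(pK*nK) - pd*(pK*nL) - nd*(pL*nK) + nd*(pL*nL) by ring.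
rewrite -mulrA e e1 e2 !mulr0 add0r addr0.
apply: mulr_ge0_le0 => //.
have := mulr_ge0 hpd (mulr_ge0 hpK hnL); have := mulr_ge0 hnd (mulr_ge0 hpL hnK); lra.
Qed.

Lemma ip_term (a d u m n : R) : 0 < a -> 0 < d -> 0 <= m -> 0 <= n -> u*n = -(n*n) ->
  a*((u-m)/d)*n <= 0 /\ (0 < n -> a*((u-m)/d)*n < 0).
Proof.
move=> ha hd hm hn e.
have hd0 : d != 0 by rewrite gt_eqF.
have -> : a*((u-m)/d)*n = (a/d) * (u*n - m*n) by field.
have had : 0 < a / d by rewrite divr_gt0.
rewrite e; split.
- apply: mulr_ge0_le0; first exact: ltW.
  have := mulr_ge0 hn hn; have := mulr_ge0 hm hn; lra.
- move=> hn'; rewrite pmulr_rlt0 //.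
  have := mulr_gt0 hn' hn'; have := mulr_ge0 hm hn; lra.
Qed.

Lemma sum_pick (i : 'I_3) (F : 'I_3 -> R) :
  \sum_j (if j == i then 1 else 0) * F j = F i.
Proof.
rewrite (bigD1 i) //= eqxx mul1r big1 ?addr0 // => j /negbTE ->; by rewrite mul0r.
Qed.

End Aux.


Section Mesh2.
Variable R : realType.
Variables nV nT : nat.
Variable p : 'I_nV -> R * R.
Variable tri : 'I_nT -> 'I_3 -> 'I_nV.

Definition delta (a : 'I_nV) : 'I_nV -> R := fun b => if b == a then 1 else 0.

Lemma area_pos K : sdet p tri K != 0 -> 0 < area p tri K.
Proof. by move=> h; rewrite /area divr_gt0 // normr_gt0. Qed.

Lemma sdet_eq01 K : tri K i0 = tri K i1 -> sdet p tri K = 0.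
Proof. by move=> e; rewrite /sdet /vtx e /=; ring. Qed.
Lemma sdet_eq02 K : tri K i0 = tri K i2 -> sdet p tri K = 0.
Proof. by move=> e; rewrite /sdet /vtx e /=; ring. Qed.
Lemma sdet_eq12 K : tri K i1 = tri K i2 -> sdet p tri K = 0.
Proof. by move=> e; rewrite /sdet /vtx e /=; ring. Qed.

Lemma local_neg K (v : 'I_nV -> R) (a : 'I_nV) :
  sdet p tri K != 0 -> H2 p tri -> (forall c, v a <= v c) ->
  dot (grad p tri K v) (grad p tri K (delta a)) <= 0.
Proof.
move=> hs h2 hmin.
have hA := h2 K i0 i1 i2 isT isT isT.
have hB := h2 K i1 i0 i2 isT isT isT.
have hC := h2 K i2 i0 i1 isT isT isT.
have hs' := hs.
move: hA hB hC hs; rewrite /grad /dot /vsub /sdet /vtx /=.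
move=> hA hB hC hD; apply: pure => //.
have m0 := hmin (tri K i0); have m1 := hmin (tri K i1); have m2 := hmin (tri K i2).
rewrite /delta.
case: (eqVneq (tri K i0) a) => [e0|n0]; case: (eqVneq (tri K i1) a) => [e1|n1];
  case: (eqVneq (tri K i2) a) => [e2|n2];
  rewrite ?e0 ?e1 ?e2 ?eqxx ?(negbTE n0) ?(negbTE n1) ?(negbTE n2).
- by exfalso; move/eqP: hs'; apply; apply: sdet_eq01; rewrite e0 e1.
- by exfalso; move/eqP: hs'; apply; apply: sdet_eq01; rewrite e0 e1.
- by exfalso; move/eqP: hs'; apply; apply: sdet_eq02; rewrite e0 e2.
- by left; repeat split; lra.
- by exfalso; move/eqP: hs'; apply; apply: sdet_eq12; rewrite e1 e2.
- by right; left; repeat split; lra.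
- by right; right; left; repeat split; lra.
- by right; right; right; split; lra.
Qed.

Definition Mass (a : 'I_nV) : R :=
  \sum_K area p tri K / 3 * \sum_i delta a (tri K i).

Lemma lumped_delta (f : 'I_nV -> R) a : lumped p tri f (delta a) = f a * Mass a.
Proof.
rewrite /lumped /Mass mulr_sumr; apply: eq_bigr => K _.
rewrite mulrCA; congr (_ * _); rewrite mulr_sumr; apply: eq_bigr => i _.
by rewrite /delta; case: eqP => [->|_]; rewrite ?mulr1 ?mulr0.
Qed.

Lemma delta_ge0 a b : 0 <= delta a b.
Proof. by rewrite /delta; case: eqP. Qed.

Lemma Mass_pos a K i : (forall K, sdet p tri K != 0) -> tri K i = a -> 0 < Mass a.
Proof.
move=> hs e; rewrite /Mass (bigD1 K) //=.
have h1 : 0 <= \sum_(K0 | K0 != K) area p tri K0 / 3 * \sum_i delta a (tri K0 i).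
  apply: sumr_ge0 => L _; apply: mulr_ge0.
    by apply: divr_ge0 => //; apply: ltW; apply: area_pos.
  by apply: sumr_ge0 => j _; apply: delta_ge0.
have h2 : 1 <= \sum_i delta a (tri K i).
  rewrite (bigD1 i) //= {1}/delta e eqxx.
  have : 0 <= \sum_(j | j != i) delta a (tri K j) by apply: sumr_ge0 => j _; apply: delta_ge0.
  lra.
have h3 : 0 < area p tri K / 3 by apply: divr_gt0 => //; apply: area_pos.
have := mulr_gt0 h3 (lt_le_trans ltr01 h2). lra.
Qed.

End Mesh2.

Unset Implicit Arguments.
Theorem mainTheorem2 (R : realType) (nV nT : nat)
    (p : 'I_nV -> R * R) (tri : 'I_nT -> 'I_3 -> 'I_nV)
    (k0 k1 k2 k3 k4 tau dt eps : R)
    (um : 'I_nT -> R) (vm : 'I_nV -> R)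
    (v1 : 'I_nV -> R) (u1 mu1 : 'I_nT -> R) :
  is_mesh p tri -> H1 p tri -> H2 p tri ->
  0 < k0 -> 0 < k1 -> 0 < k2 -> 0 < k3 -> 0 < k4 ->
  (tau = 0 \/ tau = 1) -> 0 < dt -> 0 < eps ->
  P0_nonneg um -> (0 < tau -> P1_nonneg tri vm) ->
  step1 p tri tau dt k2 k3 k4 um vm v1 ->
  step2 p tri dt eps k0 k1 um u1 mu1 v1 ->
  P0_nonneg u1 /\ P1_nonneg tri v1.
Proof.
move=> hmesh _ h2 hk0 hk1 hk2 hk3 hk4 htau hdt heps hum hvm hs1 [hpos [hs2 _]].
have hsd : forall K, sdet p tri K != 0 by case: hmesh.
have harea : forall K, 0 < area p tri K by move=> K; apply: area_pos.
have hu : P0_nonneg u1.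
  move=> K0; rewrite leNgt; apply/negP => hneg.
  have := hs2 (fun K => negp (u1 K)).
  have hA : a_upw p tri mu1 (fun K => posp (u1 K)) (fun K => negp (u1 K)) <= 0.
    rewrite /a_upw; apply: sumr_le0 => K _; apply: sumr_le0 => L _.
    have c0 : 0 <= edge_len p tri K L / De p tri K L.
      by rewrite /edge_len /De /dist divr_ge0 // sqrtr_ge0.
    have [pK [nK [pnK _]]] := pn_facts (u1 K).
    have [pL [nL [pnL _]]] := pn_facts (u1 L).
    have [pd [nd _]] := pn_facts (mu1 K - mu1 L).
    by apply: upw_term.
  have hI : ip00 p tri (fun K => (u1 K - um K) / dt) (fun K => negp (u1 K)) < 0.
    rewrite /ip00 (bigD1 K0) //=.
    have [_ [nK [_ [eK hK]]]] := pn_facts (u1 K0).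
    have [_ t1] := ip_term (harea K0) hdt (hum K0) nK eK.
    have := t1 (hK hneg).
    have : \sum_(K | K != K0) area p tri K * ((u1 K - um K) / dt) * negp (u1 K) <= 0.
      apply: sumr_le0 => K _.
      have [_ [nK' [_ [eK' _]]]] := pn_facts (u1 K).
      by have [t0 _] := ip_term (harea K) hdt (hum K) nK' eK'.
    lra.
  lra.
have hv : forall b, 0 <= v1 b.
  move=> b; have [a ha] := min_exists v1 b.
  suff h : 0 <= v1 a by apply: le_trans h (ha b).
  have [_ [hsurj _]] := hmesh.
  have [K [i hKi]] := hsurj a.
  have hM := Mass_pos hsd hKi.
  have := hs1 (@delta R nV a).
  rewrite !lumped_delta.
  have hS : stiff p tri v1 (@delta R nV a) <= 0.
    rewrite /stiff; apply: sumr_le0 => L _.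
    apply: mulr_ge0_le0; first exact: ltW.
    by apply: local_neg.
  have hI : 0 <= ip01 p tri um (@delta R nV a).
    rewrite /ip01; apply: sumr_ge0 => L _; apply: mulr_ge0.
      by apply: mulr_ge0 => //; apply: ltW.
    by apply: divr_ge0 => //; apply: sumr_ge0 => j _; apply: delta_ge0.
  have hk2S := mulr_ge0_le0 (ltW hk2) hS.
  have hk4I := mulr_ge0 (ltW hk4) hI.
  case: htau => ht.
  - rewrite ht mul0r add0r => e.
    have : 0 <= k3 * (v1 a * Mass p tri a) by lra.
    rewrite pmulr_rge0 // pmulr_lge0 //.
  - have hvma : 0 <= vm a.
      have hP0 : P1_nonneg tri vm by apply: hvm; rewrite ht ltr01.
      have hP := hP0 K (fun j => if j == i then 1 else 0).
      have := hP (fun j => ltac:(by case: (_ == _))).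
      rewrite sum_pick hKi; apply.
      rewrite -[RHS](sum_pick i (fun=> 1)); apply: eq_bigr => j _; by rewrite mulr1.
    rewrite ht mul1r => e.
    set M := Mass p tri a in hM e.
    have hi : 0 < dt^-1 by rewrite invr_gt0.
    have eX : (v1 a - vm a) / dt * M = (v1 a * M - vm a * M) * dt^-1 by ring.
    rewrite eX in e.
    have hY : 0 <= vm a * M by apply: mulr_ge0 => //; apply: ltW.
    suff hX : 0 <= v1 a * M by rewrite pmulr_lge0 in hX.
    rewrite leNgt; apply/negP => hX.
    have h1 : v1 a * M * dt^-1 < 0 by rewrite pmulr_llt0.
    have h3 : k3 * (v1 a * M) < 0 by rewrite pmulr_rlt0.
    have := mulr_ge0 hY (ltW hi).
    rewrite mulrBl in e; lra.
split => //.
move=> K l hl _; apply: sumr_ge0 => i _; apply: mulr_ge0 => //.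
Qed.
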